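(* Let $G$ and $H$ be graphs, each with at least $2$ vertices. The Cartesian product $G \Box H$ is $1$-perfectly orientable if and only if one of the following holds: (i) $G$ is edgeless and $H$ is $1$-perfectly orientable, or vice versa (i.e. $H$ is edgeless and $G$ is $1$-perfectly orientable); (ii) $G\cong pK_1+qK_2$ and $H\cong rK_1+sK_2$ for some integers $p,q,r,s\ge 0$.
   Context: All graphs are finite and simple. An orientation of a graph $G$ is $1$-perfect if the out-neighborhood of every vertex induces a clique in $G$; $G$ is $1$-perfectly orientable ($1$-p.o.) if it admits a $1$-perfect orientation. The Cartesian product $G\Box H$ has vertex set $V(G)\times V(H)$, with distinct $(u,v),(u',v')$ adjacent iff either $u=u'$ and $vv'\in E(H)$, or $v=v'$ and $uu'\in E(G)$. $G+H$ denotes disjoint union and $kG$ the disjoint union of $k$ copies of $G$; $K_n$ is the complete graph on $n$ vertices. *)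

(* Defs.v *)
From mathcomp Require Import all_boot.
Set Implicit Arguments. Unset Strict Implicit. Unset Printing Implicit Defensive.

Definition simple_graph (T : finType) (e : rel T) : Prop :=
  symmetric e /\ irreflexive e.

Definition edgeless (T : finType) (e : rel T) : Prop := forall x y, ~~ e x y.

Definition cart_rel (T1 T2 : finType) (e1 : rel T1) (e2 : rel T2) : rel (T1 * T2) :=
  fun u v => ((u.1 == v.1) && e2 u.2 v.2) || ((u.2 == v.2) && e1 u.1 v.1).

Definition orientation (T : finType) (e o : rel T) : Prop :=
  (forall x y, e x y = o x y || o y x) /\ (forall x y, o x y -> ~~ o y x).

Definition one_perfect (T : finType) (e o : rel T) : Prop :=
  forall v x y, o v x -> o v y -> x != y -> e x y.

Definition one_po (T : finType) (e : rel T) : Prop :=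
  exists o : rel T, orientation e o /\ one_perfect e o.

Definition K1K2_vert (p q : nat) : finType := ('I_p + ('I_q * bool))%type.

Definition K1K2_rel (p q : nat) : rel (K1K2_vert p q) :=
  fun u v => match u, v with
             | inr (i, b), inr (j, c) => (i == j) && (b != c)
             | _, _ => false
             end.

Definition isomorphic (T S : finType) (e : rel T) (f : rel S) : Prop :=
  exists phi : T -> S, bijective phi /\ forall x y, e x y = f (phi x) (phi y).

Definition iso_pK1_qK2 (T : finType) (e : rel T) : Prop :=
  exists p q : nat, isomorphic e (@K1K2_rel p q).

(* Main.v *)
Require Import Defs.
From mathcomp Require Import all_boot.
Set Implicit Arguments. Unset Strict Implicit. Unset Printing Implicit Defensive.

Definition deg1 (T : finType) (e : rel T) := forall x y z, e x y -> e x z -> y = z.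

Section Cart.
Variables (T1 T2 : finType) (e1 : rel T1) (e2 : rel T2).
Hypotheses (s1 : simple_graph e1) (s2 : simple_graph e2).

Lemma cart_layer w w' y : cart_rel e1 e2 (w, y) (w', y) = e1 w w'.
Proof. by rewrite /cart_rel /= eqxx s2.2 andbF. Qed.
Lemma cart_rung w y y' : cart_rel e1 e2 (w, y) (w, y') = e2 y y'.
Proof. by rewrite /cart_rel /= eqxx s1.2 andbF orbF. Qed.
Lemma cart_diag w w' y y' : w != w' -> y != y' -> cart_rel e1 e2 (w, y) (w', y') = false.
Proof. by rewrite /cart_rel /= => /negbTE -> /negbTE ->. Qed.

Lemma neq_of_e1 x y : e1 x y -> x != y.
Proof. by apply: contraTneq => ->; rewrite s1.2. Qed.
Lemma neq_of_e2 x y : e2 x y -> x != y.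
Proof. by apply: contraTneq => ->; rewrite s2.2. Qed.

Variable o : rel (T1 * T2).
Hypotheses (ho : orientation (cart_rel e1 e2) o) (hp : one_perfect (cart_rel e1 e2) o).

Lemma force u a b : o u a -> cart_rel e1 e2 u b -> a != b -> ~~ cart_rel e1 e2 a b -> o b u.
Proof.
move=> oua; rewrite ho.1 => /orP [oub|//] nab nc.
by move: (hp oua oub nab); rewrite (negbTE nc).
Qed.

Lemma core y1 y2 v x z : e2 y1 y2 -> e1 v x -> e1 v z -> x != z ->
  o (v, y1) (v, y2) -> False.
Proof.
move=> ey evx evz nxz o0.
have ny := neq_of_e2 ey; have ny' : y2 != y1 by rewrite eq_sym.
have nvx := neq_of_e1 evx; have nvz := neq_of_e1 evz.
have nxv : x != v by rewrite eq_sym. have nzv : z != v by rewrite eq_sym.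
have nzx : z != x by rewrite eq_sym.
have pne : forall (a b : T1) (c d : T2), c != d -> (a, c) != (b, d).
  by move=> a b c d ncd; rewrite xpair_eqE (negbTE ncd) andbF.
have pne' : forall (a b : T1) (c d : T2), a != b -> (a, c) != (b, d).
  by move=> a b c d ncd; rewrite xpair_eqE (negbTE ncd).
have oA1B1 : o (x, y1) (v, y1).
  by apply: (force o0); [rewrite cart_layer|apply: pne|rewrite cart_diag].
have oC1B1 : o (z, y1) (v, y1).
  by apply: (force o0); [rewrite cart_layer|apply: pne|rewrite cart_diag].
have oA2A1 : o (x, y2) (x, y1).
  by apply: (force oA1B1); [rewrite cart_rung|apply: pne'|rewrite cart_diag].
have oC2C1 : o (z, y2) (z, y1).
  by apply: (force oC1B1); [rewrite cart_rung|apply: pne'|rewrite cart_diag].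
case exz: (e1 x z).
  have oC2A2 : o (z, y2) (x, y2).
    by apply: (force oA2A1); [rewrite cart_layer|apply: pne|rewrite cart_diag].
  by move: (hp oC2C1 oC2A2 (pne _ _ _ _ ny)); rewrite cart_diag.
have oB2A2 : o (v, y2) (x, y2).
  by apply: (force oA2A1); [rewrite cart_layer s1.1|apply: pne|rewrite cart_diag].
have oB2C2 : o (v, y2) (z, y2).
  by apply: (force oC2C1); [rewrite cart_layer s1.1|apply: pne|rewrite cart_diag].
by move: (hp oB2A2 oB2C2 (pne' _ _ _ _ nxz)); rewrite cart_layer exz.
Qed.

Lemma key y1 y2 : e2 y1 y2 -> deg1 e1.
Proof.
move=> ey v x z evx evz; case: (eqVneq x z) => // nxz; exfalso.
have := cart_rung v y1 y2; rewrite ey ho.1 => /orP [o0|o0].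
  exact: (core ey evx evz nxz o0).
by apply: (core _ evx evz nxz o0); rewrite s2.1.
Qed.

Lemma restrict2 (x0 : T1) : one_po e2.
Proof.
exists (fun y y' => o (x0, y) (x0, y')); split; [split|].
- by move=> y y'; rewrite -(cart_rung x0) ho.1.
- by move=> y y'; apply: ho.2.
- by move=> v a b oa ob nab; rewrite -(cart_rung x0); apply: hp oa ob _; rewrite xpair_eqE eqxx.
Qed.
End Cart.

Lemma cart_swap (T1 T2 : finType) (e1 : rel T1) (e2 : rel T2) u v :
  cart_rel e2 e1 u v = cart_rel e1 e2 (u.2, u.1) (v.2, v.1).
Proof. by rewrite /cart_rel /= orbC. Qed.

Lemma po_swap (T1 T2 : finType) (e1 : rel T1) (e2 : rel T2) :
  one_po (cart_rel e1 e2) -> one_po (cart_rel e2 e1).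
Proof.
case=> o [[h1 h2] h3].
exists (fun u v => o (u.2, u.1) (v.2, v.1)); split; [split|].
- by move=> u v; rewrite cart_swap h1.
- by move=> u v; apply: h2.
- move=> v a b oa ob nab; rewrite cart_swap; apply: h3 oa ob _.
  by case: a b nab => a1 a2 [b1 b2]; rewrite !xpair_eqE andbC.
Qed.

Section Iso.
Variables (T : finType) (e : rel T).
Hypotheses (s : simple_graph e) (d : deg1 e).

Definition mate x := odflt x [pick y | e x y].
Lemma mateP x y : e x y -> mate x = y.
Proof. by rewrite /mate; case: pickP => [z ez exy|/(_ y) ->//]; apply: d ez exy. Qed.
Lemma mate_e x y : e x y -> e x (mate x).
Proof. by move=> exy; rewrite (mateP exy). Qed.
Lemma mateK x y : e x y -> mate (mate x) = x.
Proof. by move=> /mate_e exm; apply: mateP; rewrite s.1. Qed.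

Definition Iset := [set x | [forall y, ~~ e x y]].
Definition Rset := [set x | e x (mate x) && (enum_rank x < enum_rank (mate x))].

Lemma I_e x y : x \in Iset -> e x y = false.
Proof. by rewrite inE => /forallP /(_ y) /negbTE. Qed.
Lemma R_e x : x \in Rset -> e x (mate x).
Proof. by rewrite inE => /andP []. Qed.
Lemma R_mate x : x \in Rset -> mate x \notin Rset.
Proof.
move=> xR; have ex := R_e xR; move: xR; rewrite !inE (mateK ex) ex /= => lt.
by rewrite s.1 ex /= -leqNgt ltnW.
Qed.
Lemma notI x y : e x y -> x \notin Iset.
Proof. by move=> exy; apply/negP => xI; rewrite (I_e y xI) in exy. Qed.

Definition psi (a : K1K2_vert #|Iset| #|Rset|) : T :=
  match a with
  | inl i => enum_val i
  | inr (j, true) => enum_val j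
  | inr (j, false) => mate (enum_val j)
  end.

Lemma psi_edge a b : e (psi a) (psi b) = K1K2_rel a b.
Proof.
have Ie : forall (i : 'I_#|Iset|) y, e (enum_val i) y = false.
  by move=> i y; apply: I_e; apply: enum_valP.
case: a => [i|[j bj]]; first by rewrite /= Ie.
case: b => [k|[k bk]]; first by rewrite /= s.1 Ie.
have Rj := enum_valP j; have Rk := enum_valP k.
have ej := R_e Rj; have ek := R_e Rk.
rewrite /K1K2_rel /=.
case: bj; case: bk => /=.
- rewrite ?andbF; apply/negbTE/negP => /mateP h; move: (R_mate Rj); by rewrite h Rk.
- rewrite andbT; apply/idP/idP.
    by move=> /mateP h; have := mateK ek; rewrite -h (mateK ej) => /enum_val_inj ->; rewrite eqxx.
  by move=> /eqP ->.
- rewrite andbT; apply/idP/idP.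
    by rewrite s.1 => /mateP h; have := mateK ej; rewrite -h (mateK ek) => /enum_val_inj ->; rewrite eqxx.
  by move=> /eqP ->; rewrite s.1.
- rewrite ?andbF; apply/negbTE/negP => /mateP h; move: h; rewrite (mateK ej) => h.
  by move: (R_mate Rk); rewrite -h Rj.
Qed.

Lemma psi_inj : injective psi.
Proof.
have inI : forall (i : 'I_#|Iset|), enum_val i \in Iset by move=> i; apply: enum_valP.
have RnI : forall (j : 'I_#|Rset|) b, psi (inr (j, b)) \notin Iset.
  move=> j b; have ej := R_e (enum_valP j).
  by case: b => /=; [apply: notI ej|apply: (@notI _ (enum_val j)); rewrite s.1].
case=> [i|[j bj]] [k|[k bk]] /=.
- by move=> /enum_val_inj -> //.
- by move=> h; move: (RnI k bk); rewrite /= -h inI.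
- by move=> h; move: (RnI j bj); rewrite /= h inI.
have Rj := enum_valP j; have Rk := enum_valP k.
have ej := R_e Rj; have ek := R_e Rk.
case: bj; case: bk => /=.
- by move=> /enum_val_inj -> //.
- by move=> h; move: (R_mate Rk); rewrite -h Rj.
- by move=> h; move: (R_mate Rj); rewrite h Rk.
- by move=> h; have := mateK ek; rewrite -h (mateK ej) => /enum_val_inj -> //.
Qed.

Lemma psi_surj x : exists a, psi a == x.
Proof.
case xI: (x \in Iset).
  by exists (inl (enum_rank_in xI x)); rewrite /= enum_rankK_in.
move: xI; rewrite inE => /negbT /forallPn [y]; rewrite negbK => exy.
have em := mate_e exy.
have nx : enum_rank x != enum_rank (mate x).
  by apply: contraTneq em => /enum_rank_inj <-; rewrite s.2.
case: (ltngtP (enum_rank x) (enum_rank (mate x))) nx => [lt _|lt _|/val_inj ->]; last by rewrite eqxx.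
  have xR : x \in Rset by rewrite inE em.
  by exists (inr (enum_rank_in xR x, true)); rewrite /= enum_rankK_in.
have xR : mate x \in Rset.
  by rewrite inE (mateK exy) lt andbT s.1.
by exists (inr (enum_rank_in xR (mate x), false)); rewrite /= enum_rankK_in // (mateK exy).
Qed.

Lemma iso_of_deg1 : iso_pK1_qK2 e.
Proof.
exists #|Iset|, #|Rset|.
pose phi x := xchoose (psi_surj x).
have K1 : cancel phi psi by move=> x; apply/eqP; apply: (xchooseP (psi_surj x)).
have K2 : cancel psi phi by move=> a; apply: psi_inj; rewrite K1.
exists phi; split; first by exists psi.
by move=> x y; rewrite -psi_edge !K1.
Qed.
End Iso.

Lemma K1K2_deg1 p q : deg1 (@K1K2_rel p q).
Proof.
case=> [?|[i b]] [?|[j c]] [?|[k d]] //=.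
move=> /andP [/eqP <- bc] /andP [/eqP <- bd].
by congr (inr (_, _)); move: b c d bc bd => [] [] [].
Qed.

Lemma deg1_of_iso (T : finType) (e : rel T) : iso_pK1_qK2 e -> deg1 e.
Proof.
case=> p [q [phi [bij h]]] x y z; rewrite !h => /K1K2_deg1 H /H.
exact: bij_inj.
Qed.

Lemma po_edgeless (T1 T2 : finType) (e1 : rel T1) (e2 : rel T2) :
  edgeless e1 -> one_po e2 -> one_po (cart_rel e1 e2).
Proof.
move=> ed [o2 [[h1 h2] h3]].
exists (fun u v => (u.1 == v.1) && o2 u.2 v.2); split; [split|].
- move=> [a b] [c d]; rewrite /cart_rel /= (negbTE (ed a c)) andbF orbF h1.
  by rewrite (eq_sym c a); case: (a == c).
- by move=> u v /andP [_ /h2 /negbTE ->]; rewrite andbF.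
- move=> [v1 v2] [a1 a2] [b1 b2] /= /andP [/eqP <- oa] /andP [/eqP <- ob] nab.
  rewrite /cart_rel /= eqxx (h3 _ _ _ oa ob) //.
  by apply: contraNneq nab => ->.
Qed.

Section Deg1.
Variables (T : finType) (e : rel T).
Hypotheses (s : simple_graph e) (d : deg1 e).
Definition sg x := [exists y, e x y && (enum_rank x < enum_rank y)].
Lemma sgE x x' : e x x' -> sg x = (enum_rank x < enum_rank x').
Proof.
move=> exx; apply/existsP/idP; last by move=> lt; exists x'; rewrite exx.
by case=> y /andP [exy lt]; rewrite (d exx exy).
Qed.
Lemma sg_flip x x' : e x x' -> sg x' = ~~ sg x.
Proof.
move=> exx; rewrite (sgE exx) (@sgE x' x); last by rewrite s.1.
have nx : (nat_of_ord (enum_rank x') != enum_rank x).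
  by apply: contraTneq exx => /val_inj /enum_rank_inj ->; rewrite s.2.
by rewrite -leqNgt ltn_neqAle nx.
Qed.
End Deg1.

Lemma po_deg1 (T1 T2 : finType) (e1 : rel T1) (e2 : rel T2) :
  simple_graph e1 -> simple_graph e2 -> deg1 e1 -> deg1 e2 -> one_po (cart_rel e1 e2).
Proof.
move=> s1 s2 d1 d2.
pose o (u v : T1 * T2) := ((u.2 == v.2) && e1 u.1 v.1 && (sg e1 u.1 == sg e2 u.2))
   || ((u.1 == v.1) && e2 u.2 v.2 && (sg e1 u.1 != sg e2 u.2)).
exists o; split; [split|].
- move=> [a b] [c d]; rewrite /o /cart_rel /=.
  case: (eqVneq a c) => [<-|nac]; case: (eqVneq b d) => [<-|nbd];
    rewrite ?s1.2 ?s2.2 ?andbF ?andFb ?eqxx ?andbT ?andTb ?orbF //=.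
  + case ebd: (e2 b d) => /=; last by rewrite (s2.1 d b) ebd.
    rewrite s2.1 ebd /= (sg_flip s2 d2 ebd).
    by case: (sg e1 a); case: (sg e2 b).
  + case eac: (e1 a c) => /=; last by rewrite (s1.1 c a) eac.
    rewrite s1.1 eac /= (sg_flip s1 d1 eac).
    by case: (sg e1 a); case: (sg e2 b).
- move=> [a b] [c d]; rewrite /o /=.
  case/orP => /andP [/andP [/eqP <- e] h].
    rewrite (s1.1 c a) e /= eqxx /= (sg_flip s1 d1 e).
    have -> : (c == a) = false by apply/negbTE; apply: contraTneq e => ->; rewrite s1.2.
    by move: h; case: (sg e1 a); case: (sg e2 b).
  rewrite (s2.1 d b) e /= eqxx /= (sg_flip s2 d2 e).
  have -> : (d == b) = false by apply/negbTE; apply: contraTneq e => ->; rewrite s2.2.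
  by move: h; case: (sg e1 a); case: (sg e2 b).
- move=> [v1 v2] [a1 a2] [b1 b2]; rewrite /o /= => oa ob nab; exfalso; move: nab.
  apply/negP; rewrite negbK.
  case/orP: oa => /andP [/andP [/eqP <- ea] ha];
  case/orP: ob => /andP [/andP [/eqP <- eb] hb].
  + by rewrite (d1 _ _ _ ea eb).
  + by move: ha hb => /eqP ->; rewrite eqxx.
  + by move: ha hb => /negbTE ->.
  + by rewrite (d2 _ _ _ ea eb).
Qed.

Lemma has_edge (T : finType) (e : rel T) :
  edgeless e \/ exists x y, e x y.
Proof.
case: (boolP [exists x, exists y, e x y]) => [/existsP [x /existsP [y h]]|N].
  by right; exists x, y.
left => x y; apply/negP => exy; move/negP: N; apply; apply/existsP; exists x.
by apply/existsP; exists y.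
Qed.

Theorem theorem7 (T1 T2 : finType) (e1 : rel T1) (e2 : rel T2) :
  simple_graph e1 -> simple_graph e2 ->
  1 < #|T1| -> 1 < #|T2| ->
  (one_po (cart_rel e1 e2) <->
   ((edgeless e1 /\ one_po e2) \/ (edgeless e2 /\ one_po e1)) \/
   (iso_pK1_qK2 e1 /\ iso_pK1_qK2 e2)).
Proof.
move=> s1 s2 c1 c2; split.
- move=> hpo; have hpo' := po_swap hpo.
  case: hpo => o [ho hp]; case: hpo' => o' [ho' hp'].
  have [x0 _] : exists x : T1, x \in T1 by apply/card_gt0P; apply: ltnW.
  have [y0 _] : exists y : T2, y \in T2 by apply/card_gt0P; apply: ltnW.
  case: (has_edge e1) => [ed1|[x1 [x2 ex]]].
    by left; left; split => //; apply: (restrict2 s1 ho hp x0).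
  case: (has_edge e2) => [ed2|[y1 [y2 ey]]].
    by left; right; split => //; apply: (restrict2 s2 ho' hp' y0).
  right; split; apply: iso_of_deg1 => //.
    exact: (key s1 s2 ho hp ey).
  exact: (key s2 s1 ho' hp' ex).
- case=> [[[ed1 p2]|[ed2 p1]]|[i1 i2]].
  + exact: po_edgeless.
  + by apply: po_swap; apply: po_edgeless.
  + by apply: po_deg1 => //; apply: deg1_of_iso.
Qed.
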